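(* Let $e:S\to A$ and $f:A\to X$ be morphisms in a weakly unital category $\mathbb{C}$. If $fe$ has trivial centralizer, then so does $f$. In particular (taking $A=X$, $f=1_X$), if $e:S\to X$ has trivial centralizer, then $X$ has trivial center.
   Context: A pointed category $\mathbb{C}$ with finite products is weakly unital if for all objects $A,B$ the morphisms $\langle 1,0\rangle:A\to A\times B$ and $\langle 0,1\rangle:B\to A\times B$ are jointly epimorphic. Morphisms $f:A\to X$ and $g:B\to X$ commute if there exists $\varphi:A\times B\to X$ with $\varphi\langle1,0\rangle=f$ and $\varphi\langle0,1\rangle=g$. The centralizer $z_f:Z_X(A,f)\to X$ of $f$ is the terminal object in the category of morphisms $g:B\to X$ commuting with $f$ (morphisms being maps over $X$); $f$ has trivial centralizer if $Z_X(A,f)=0$. The center of $X$ is the centralizer of $1_X$; $X$ has trivial center if it is $0$. *)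

(* Defs.v *)
Set Implicit Arguments.

Record Category := {
  Ob :> Type;
  Hom : Ob -> Ob -> Type;
  idm : forall A : Ob, Hom A A;
  comp : forall A B C : Ob, Hom B C -> Hom A B -> Hom A C;
  comp_assoc : forall A B C D (h : Hom C D) (g : Hom B C) (f : Hom A B),
      comp h (comp g f) = comp (comp h g) f;
  comp_id_l : forall A B (f : Hom A B), comp (idm B) f = f;
  comp_id_r : forall A B (f : Hom A B), comp f (idm A) = f
}.

Arguments Hom {c} _ _.
Arguments idm {c} _.
Arguments comp {c A B C} _ _.
Notation "g \o f" := (comp g f) (at level 40, left associativity).

Definition is_initial {C : Category} (I : C) : Type :=
  forall B : C, { h : Hom I B | forall h' : Hom I B, h' = h }.
Definition is_terminal {C : Category} (T : C) : Type :=
  forall B : C, { h : Hom B T | forall h' : Hom B T, h' = h }.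
Definition is_zero_object {C : Category} (Z : C) : Type :=
  (is_initial Z * is_terminal Z)%type.

Record BinProduct {C : Category} (A B : C) := {
  prod_ob : C;
  pr1 : Hom prod_ob A;
  pr2 : Hom prod_ob B;
  pairing : forall Y : C, Hom Y A -> Hom Y B -> Hom Y prod_ob;
  pairing_pr1 : forall Y (f : Hom Y A) (g : Hom Y B), pr1 \o pairing Y f g = f;
  pairing_pr2 : forall Y (f : Hom Y A) (g : Hom Y B), pr2 \o pairing Y f g = g;
  pairing_unique : forall Y (f : Hom Y A) (g : Hom Y B) (h : Hom Y prod_ob),
      pr1 \o h = f -> pr2 \o h = g -> h = pairing Y f g
}.

(** A pointed category with finite products: a zero object (which is also
    the empty product / terminal object) and chosen binary products. *)
Record PointedProdCategory := {
  cat :> Category;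
  zero_ob : cat;
  zero_ob_is_zero : is_zero_object zero_ob;
  bprod : forall A B : cat, BinProduct A B
}.

Section Ops.
Context {C : PointedProdCategory}.

Definition to_zero (A : C) : Hom A (zero_ob C) :=
  proj1_sig (snd (zero_ob_is_zero C) A).
Definition from_zero (B : C) : Hom (zero_ob C) B :=
  proj1_sig (fst (zero_ob_is_zero C) B).

Definition zmor (A B : C) : Hom A B := from_zero B \o to_zero A.

Definition prodO (A B : C) : C := prod_ob (bprod C A B).
Definition pair {A B Y : C} (f : Hom Y A) (g : Hom Y B) : Hom Y (prodO A B) :=
  pairing (bprod C A B) Y f g.

Definition inj1 (A B : C) : Hom A (prodO A B) := pair (idm A) (zmor A B).
Definition inj2 (A B : C) : Hom B (prodO A B) := pair (zmor B A) (idm B).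

Definition weakly_unital : Prop :=
  forall (A B Y : C) (u v : Hom (prodO A B) Y),
    u \o inj1 A B = v \o inj1 A B ->
    u \o inj2 A B = v \o inj2 A B -> u = v.

Definition commute {A B X : C} (f : Hom A X) (g : Hom B X) : Prop :=
  exists phi : Hom (prodO A B) X, phi \o inj1 A B = f /\ phi \o inj2 A B = g.

(** z : Z -> X is a centralizer of f : A -> X: a terminal object in the
    category of morphisms g : B -> X commuting with f (maps over X). *)
Definition is_centralizer {A X : C} (f : Hom A X) {Z : C} (z : Hom Z X) : Prop :=
  commute f z /\
  forall (B : C) (g : Hom B X), commute f g ->
    exists h : Hom B Z, z \o h = g /\ forall h' : Hom B Z, z \o h' = g -> h' = h.

Definition trivial_centralizer {A X : C} (f : Hom A X) : Prop :=
  exists (Z : C) (z : Hom Z X), is_centralizer f z /\ inhabited (is_zero_object Z).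

Definition trivial_center (X : C) : Prop := trivial_centralizer (idm X).

End Ops.

(* Main.v *)
Require Import Defs.

Section L.
Context {C : PointedProdCategory}.

Lemma p1_pair {A B Y : C} (f : Hom Y A) (g : Hom Y B) :
  pr1 (bprod C A B) \o pair f g = f.
Proof. unfold pair; apply pairing_pr1. Qed.
Lemma p2_pair {A B Y : C} (f : Hom Y A) (g : Hom Y B) :
  pr2 (bprod C A B) \o pair f g = g.
Proof. unfold pair; apply pairing_pr2. Qed.

Lemma pair_comp {A B Y W : C} (f : Hom Y A) (g : Hom Y B) (k : Hom W Y) :
  pair f g \o k = pair (f \o k) (g \o k).
Proof.
  apply (pairing_unique (bprod C A B)).
  - change (pr1 (bprod C A B) \o (pair f g \o k) = f \o k).
    rewrite comp_assoc. apply (f_equal (fun t => t \o k)). apply p1_pair.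
  - change (pr2 (bprod C A B) \o (pair f g \o k) = g \o k).
    rewrite comp_assoc. apply (f_equal (fun t => t \o k)). apply p2_pair.
Qed.

Lemma zmor_r {A B W : C} (k : Hom W A) : zmor A B \o k = zmor W B.
Proof.
  unfold zmor. rewrite <- comp_assoc. f_equal.
  unfold to_zero. destruct (snd (zero_ob_is_zero C) W) as [h Hh]; simpl.
  rewrite (Hh (proj1_sig (snd (zero_ob_is_zero C) A) \o k)). reflexivity.
Qed.

Lemma zmor_l {A B W : C} (k : Hom B W) : k \o zmor A B = zmor A W.
Proof.
  unfold zmor. rewrite comp_assoc. f_equal.
  unfold from_zero. destruct (fst (zero_ob_is_zero C) W) as [h Hh]; simpl.
  rewrite (Hh (k \o proj1_sig (fst (zero_ob_is_zero C) B))). reflexivity.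
Qed.

Lemma part1 (S A X : C) (e : Hom S A) (f : Hom A X) :
  trivial_centralizer (f \o e) -> trivial_centralizer f.
Proof.
  intros [Z [z [[Hc Hu] [HZ]]]].
  exists Z, z. split; [split|constructor; exact HZ].
  - exists (f \o pr1 (bprod C A Z)). split.
    + unfold inj1. rewrite <- comp_assoc, p1_pair. apply comp_id_r.
    + destruct (fst HZ X) as [h Hh].
      rewrite (Hh z). apply Hh.
  - intros B g [phi [H1 H2]].
    apply Hu. exists (phi \o pair (e \o pr1 (bprod C S B)) (pr2 (bprod C S B))).
    split.
    + rewrite <- comp_assoc. unfold inj1 at 1. rewrite pair_comp.
      rewrite <- comp_assoc, p1_pair, p2_pair, comp_id_r.
      rewrite <- H1, <- comp_assoc. f_equal.
      unfold inj1. rewrite pair_comp, comp_id_l, zmor_r. reflexivity.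
    + rewrite <- comp_assoc. unfold inj2 at 1. rewrite pair_comp.
      rewrite <- comp_assoc, p1_pair, p2_pair, zmor_l.
      rewrite <- H2. reflexivity.
Qed.
End L.

Theorem proposition3p2 (C : PointedProdCategory) (HC : @weakly_unital C) :
  (forall (S A X : C) (e : Hom S A) (f : Hom A X),
      trivial_centralizer (f \o e) -> trivial_centralizer f) /\
  (forall (S X : C) (e : Hom S X),
      trivial_centralizer e -> trivial_center X).
Proof.
  split.
  - exact part1.
  - intros S X e H. unfold trivial_center. apply (@part1 C S X X e).
    rewrite comp_id_l. exact H.
Qed.
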